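(* Let $H\le G_{d,k}$. Every $(d-1)$-multicell of $\widetilde{\mathfrak X}_{d,k}(H)$ is contained in exactly $k$ $d$-multicells if and only if $\langle\alpha_i\rangle\cap gHg^{-1}=\{e\}$ for all $i\in[\![d]\!]$ and $g\in G_{d,k}$. In particular, if $H\trianglelefteq G_{d,k}$, this holds if and only if for every $i\in[\![d]\!]$ the image of $\alpha_i$ in $G_{d,k}/H$ has order exactly $k$.
   Context: Fix $d,k\ge1$, $[\![d]\!]=\{0,\dots,d\}$. $G_{d,k}=\langle\alpha_0,\dots,\alpha_d\mid\alpha_i^k=e\rangle$; for $J\subseteq[\![d]\!]$, $K_J=\langle\alpha_j:j\in J\rangle$, $\widehat J=[\![d]\!]\setminus J$. For $H\le G_{d,k}$, $[K_{\widehat J}g]_H=\{K_{\widehat J}gh:h\in H\}$. The multicomplex $\widetilde{\mathfrak X}_{d,k}(H)$ has as multicells of dimension $|J|-1$ the classes $[K_{\widehat J}g]_H$, with containment $[K_{\widehat I}g]_H\preceq[K_{\widehat J}g]_H$ for $I\subseteq J$. Its $d$-multicells are the $[g]_H=\{gh:h\in H\}$ and its $(d-1)$-multicells are the $[K_{\{i\}}g]_H$; the $d$-multicells containing $[K_{\{i\}}g]_H$ are the classes $[g']_H$ with $[K_{\{i\}}g']_H=[K_{\{i\}}g]_H$. *)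

(* Defs.v *)
(* The free product G_{d,k} = <a_0..a_d | a_i^k = e> is
   modelled concretely by reduced words. *)
From mathcomp Require Import all_boot.
Set Implicit Arguments. Unset Strict Implicit. Unset Printing Implicit Defensive.

(* A letter (i, a) stands for alpha_i ^ a. *)
Definition letter := (nat * nat)%type.

Definition valid (d k : nat) (l : letter) : bool := (l.1 <= d) && (0 < l.2 < k).

Definition reduced (d k : nat) (w : seq letter) : bool :=
  all (valid d k) w && sorted (fun x y : letter => x.1 != y.1) w.

(* left multiplication of a reduced word by a single letter *)
Definition push (k : nat) (l : letter) (w : seq letter) : seq letter :=
  match w with
  | l' :: w' =>
      if l.1 == l'.1 then
        (if (l.2 + l'.2) %% k == 0 then w' else (l.1, (l.2 + l'.2) %% k) :: w')
      else l :: w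
  | [::] => [:: l]
  end.

Lemma push_red d k l w :
  valid d k l -> reduced d k w -> reduced d k (push k l w).
Proof.
case: l => i a; rewrite /valid /= => /andP[id /andP[a0 ak]].
case: w => [|[j b] w] /=; first by rewrite /reduced /= /valid /= id a0 ak.
rewrite /reduced /= => /andP[/andP[/andP[jd /andP[b0 bk]] allw] pw].
have k0 : 0 < k by apply: leq_ltn_trans ak.
case: eqP => [eij|nij].
  subst j; case: eqP => [//|nz].
    by move=> _; rewrite allw (path_sorted pw).
  rewrite /= /valid /= id allw /= lt0n ltn_pmod // andbT; apply/andP; split.
    by rewrite andbT; apply/eqP.
  by case: w pw {allw} => //= [[j' c] w].
rewrite /= /valid /= id a0 ak jd b0 bk allw /= pw andbT.
by apply/eqP.
Qed.

Lemma foldr_push_red d k u w :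
  all (valid d k) u -> reduced d k w -> reduced d k (foldr (push k) w u).
Proof.
elim: u => //= l u IH /andP[vl vu] rw.
by apply: push_red => //; apply: IH.
Qed.

Definition inv_letter (k : nat) (l : letter) : letter := (l.1, k - l.2).

Lemma inv_red d k w :
  reduced d k w -> reduced d k (rev (map (inv_letter k) w)).
Proof.
rewrite /reduced => /andP[aw sw]; apply/andP; split.
  rewrite all_rev all_map; apply/allP => l /(allP aw).
  case: l => i a; rewrite /valid /inv_letter /= => /andP[-> /andP[a0 ak]].
  by rewrite subn_gt0 ak /= ltn_subrL a0 (leq_trans _ ak).
rewrite rev_sorted; rewrite sorted_map.
by apply: sub_sorted sw => x y; rewrite /inv_letter /= eq_sym.
Qed.

Definition G (d k : nat) := {w : seq letter | reduced d k w}.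

Definition Gone (d k : nat) : G d k := exist _ [::] isT.

Definition Gmul (d k : nat) (u w : G d k) : G d k :=
  exist _ (foldr (push k) (val w) (val u))
    (foldr_push_red (proj1 (andP (proj2_sig u))) (proj2_sig w)).

Definition Ginv (d k : nat) (w : G d k) : G d k :=
  exist _ (rev (map (inv_letter k) (val w))) (inv_red (proj2_sig w)).

(* the generator alpha_i (for i <= d); it is e when k = 1 *)
Definition Galpha (d k i : nat) : G d k := insubd (Gone d k) [:: (i, 1)].

Definition Gpow (d k : nat) (g : G d k) (m : nat) : G d k := iter m (Gmul g) (Gone d k).

Definition subgroup (d k : nat) (H : G d k -> Prop) : Prop :=
  [/\ H (Gone d k), (forall x y, H x -> H y -> H (Gmul x y))
    & (forall x, H x -> H (Ginv x))].

Definition normal (d k : nat) (H : G d k -> Prop) : Prop :=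
  subgroup H /\ forall g h, H h -> H (Gmul (Gmul g h) (Ginv g)).

Definition seteq (d k : nat) (A B : G d k -> Prop) : Prop := forall x, A x <-> B x.

Definition setR (d k : nat) (S : G d k -> Prop) (h : G d k) : G d k -> Prop :=
  fun x => exists s, S s /\ x = Gmul s h.

Definition mclass (d k : nat) (H : G d k -> Prop) (S : G d k -> Prop)
  : (G d k -> Prop) -> Prop :=
  fun C => exists h, H h /\ seteq C (setR S h).

Definition mceq (d k : nat) (A B : (G d k -> Prop) -> Prop) : Prop :=
  forall C, A C <-> B C.

Definition Kcoset (d k : nat) (i : nat) (g : G d k) : G d k -> Prop :=
  fun x => exists m, x = Gmul (Gpow (Galpha d k i) m) g.

(* d-multicell [g]_H  (K_{empty} g = {g}) *)
Definition dcell (d k : nat) (H : G d k -> Prop) (g : G d k) :=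
  mclass H (fun x => x = g).

(* (d-1)-multicell [K_{i} g]_H *)
Definition ridge (d k : nat) (H : G d k -> Prop) (i : nat) (g : G d k) :=
  mclass H (Kcoset i g).

(* [g']_H is contained in [K_{i} g]_H  iff  [K_{i} g']_H = [K_{i} g]_H *)
Definition dcell_in_ridge (d k : nat) (H : G d k -> Prop) (g' : G d k) (i : nat) (g : G d k) :=
  mceq (ridge H i g') (ridge H i g).

Definition count_classes (T : Type) (eqv : T -> T -> Prop) (P : T -> Prop) (n : nat) : Prop :=
  exists f : nat -> T,
    [/\ forall j, j < n -> P (f j),
        forall j1 j2, j1 < n -> j2 < n -> eqv (f j1) (f j2) -> j1 = j2
      & forall x, P x -> exists2 j, j < n & eqv x (f j)].

Definition ridge_degree (d k : nat) (H : G d k -> Prop) (i : nat) (g : G d k) (n : nat) : Prop :=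
  count_classes (fun g1 g2 => mceq (dcell H g1) (dcell H g2))
                (fun g' => dcell_in_ridge H g' i g) n.

Definition trivial_meet (d k : nat) (H : G d k -> Prop) (i : nat) (g : G d k) : Prop :=
  forall x, (exists m, x = Gpow (Galpha d k i) m) ->
            (exists2 h, H h & x = Gmul (Gmul g h) (Ginv g)) -> x = Gone d k.

Definition quot_order (d k : nat) (H : G d k -> Prop) (x : G d k) (n : nat) : Prop :=
  [/\ 0 < n, H (Gpow x n) & forall m, 0 < m < n -> ~ H (Gpow x m)].

(* Main.v *)
Require Import Defs.
From mathcomp Require Import all_boot.
From Stdlib Require Import Classical_Prop.
From mathcomp Require Import zify.
Set Implicit Arguments. Unset Strict Implicit. Unset Printing Implicit Defensive.


Lemma Gext d k (u w : G d k) : sval u = sval w -> u = w.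
Proof. case: u w => u pu [w pw] /= e; subst; congr exist; apply: bool_irrelevance. Qed.

Lemma push_cons k i a x : sorted (fun x y : letter => x.1 != y.1) ((i, a) :: x) ->
  push k (i, a) x = (i, a) :: x.
Proof. case: x => [|[j c] x] //= /andP[/negPf ne _]; by rewrite ne. Qed.

Lemma push_push d k i a b x : reduced d k x -> 0 < a < k -> 0 < b < k ->
  push k (i, a) (push k (i, b) x) =
  if (a + b) %% k == 0 then x else push k (i, (a + b) %% k) x.
Proof.
move=> rx /andP[a0 ak] /andP[b0 bk].
case: x rx => [|[j c] x] rx /=; first by rewrite eqxx; case: ifP.
case: (eqVneq i j) => [eij|nij] /=; last first.
  by rewrite eqxx; case: ifP => //= _; rewrite (negPf nij).
subst j; move: rx; rewrite /reduced /= => /andP[/andP[/andP[_ /andP[c0 ck]] _] sx].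
have cx : forall e, push k (i, e) x = (i, e) :: x.
  move=> e; case: x sx => [|[j' c'] x] //= /andP[ne _].
  by rewrite /= (negPf ne).
have E1 : (a + (b + c) %% k) %% k = ((a + b) %% k + c) %% k.
  by rewrite modnDmr modnDml addnA.
have cm : c %% k = c by rewrite modn_small.
have am : a %% k = a by rewrite modn_small.
case: ifP => [bc0|bc0]; rewrite /= ?eqxx.
  rewrite cx; case: ifP => [ab0|ab0]; last first.
    have : ((a + b) %% k + c) %% k = a.
      by rewrite -E1 (eqP bc0) addn0 am.
    by move=> ->; rewrite (gtn_eqF a0).
  have : a = c.
    by rewrite -[LHS]am -[RHS]cm -[in LHS](addn0 a) -(eqP bc0) E1 (eqP ab0) add0n.
  by move=> ->.
rewrite E1; case: (boolP ((a + b) %% k == 0)) => ab0 //.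
by rewrite (eqP ab0) add0n cm (gtn_eqF c0).
Qed.


Lemma push_act d k l v w : valid d k l -> reduced d k v -> reduced d k w ->
  foldr (push k) w (push k l v) = push k l (foldr (push k) w v).
Proof.
case: l => i a; rewrite /valid /= => /andP[_ ha] rv rw.
case: v rv => [|[j b] v] //= rv.
case: (eqVneq i j) => [eij|nij] //=; subst j.
move: rv; rewrite /reduced /= => /andP[/andP[/andP[_ hb] av] sv].
have rx : reduced d k (foldr (push k) w v).
  by apply: foldr_push_red.
by rewrite (@push_push d k i a b _ rx ha hb); case: ifP.
Qed.

Lemma Gmul_val d k (u w : G d k) : sval (Gmul u w) = foldr (push k) (sval w) (sval u).
Proof. by []. Qed.

Lemma GmulA d k (u v w : G d k) : Gmul u (Gmul v w) = Gmul (Gmul u v) w.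
Proof.
apply: Gext; rewrite !Gmul_val.
case: u => u /= /andP[au _]; case: v => v /= rv; case: w => w /= rw.
elim: u au => //= l u IH /andP[vl au].
by rewrite IH // (@push_act d) // foldr_push_red // (proj1 (andP rv)).
Qed.

Lemma Gmul1g d k (u : G d k) : Gmul (Gone d k) u = u.
Proof. by apply: Gext. Qed.

Lemma Gmulg1 d k (u : G d k) : Gmul u (Gone d k) = u.
Proof.
apply: Gext; rewrite Gmul_val /=; case: u => u /= /andP[_].
elim: u => //= l u IH su.
rewrite IH ?(path_sorted su) //; case: l su => i a; exact: push_cons.
Qed.

Lemma GmulVg d k (u : G d k) : Gmul (Ginv u) u = Gone d k.
Proof.
apply: Gext; rewrite Gmul_val /=; case: u => u /= ru.
elim: u ru => //= [[i a]] u IH ru.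
have ru' : reduced d k u.
  by move: ru; rewrite /reduced /= => /andP[/andP[_ ->] /path_sorted ->].
move: ru; rewrite /reduced /= => /andP[/andP[/andP[_ ha] _] su].
rewrite rev_cons -cats1 foldr_cat /= eqxx subnK ?modnn ?eqxx ?IH //.
by case/andP: ha => _ /ltnW.
Qed.


Lemma GmulKg d k (u x : G d k) : Gmul (Ginv u) (Gmul u x) = x.
Proof. by rewrite GmulA GmulVg Gmul1g. Qed.

Lemma GmulgV d k (u : G d k) : Gmul u (Ginv u) = Gone d k.
Proof.
rewrite -{1}(GmulKg (Ginv u) u) GmulVg Gmulg1; exact: GmulVg.
Qed.

Lemma GmulKVg d k (u x : G d k) : Gmul u (Gmul (Ginv u) x) = x.
Proof. by rewrite GmulA GmulgV Gmul1g. Qed.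

Lemma GmulgK d k (u x : G d k) : Gmul (Gmul x u) (Ginv u) = x.
Proof. by rewrite -GmulA GmulgV Gmulg1. Qed.

Lemma GmulgKV d k (u x : G d k) : Gmul (Gmul x (Ginv u)) u = x.
Proof. by rewrite -GmulA GmulVg Gmulg1. Qed.

Lemma Ginv_uniq d k (x y : G d k) : Gmul x y = Gone d k -> x = Ginv y.
Proof. by move=> e; rewrite -(GmulgK y x) e Gmul1g. Qed.

Lemma GinvK d k (x : G d k) : Ginv (Ginv x) = x.
Proof. by symmetry; apply: Ginv_uniq; rewrite GmulgV. Qed.

Lemma GinvM d k (x y : G d k) : Ginv (Gmul x y) = Gmul (Ginv y) (Ginv x).
Proof. by symmetry; apply: Ginv_uniq; rewrite -GmulA GmulKg GmulVg. Qed.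

Lemma Ginv1 d k : Ginv (Gone d k) = Gone d k.
Proof. by symmetry; apply: Ginv_uniq; rewrite Gmul1g. Qed.

Lemma GpowS d k (g : G d k) m : Gpow g m.+1 = Gmul g (Gpow g m).
Proof. by []. Qed.

Lemma Gpow0 d k (g : G d k) : Gpow g 0 = Gone d k.
Proof. by []. Qed.

Lemma GpowD d k (g : G d k) m n : Gpow g (m + n) = Gmul (Gpow g m) (Gpow g n).
Proof.
elim: m => [|m IH]; first by rewrite add0n Gpow0 Gmul1g.
by rewrite addSn !GpowS IH GmulA.
Qed.

Lemma GpowM d k (g : G d k) m n : Gpow g (m * n) = Gpow (Gpow g m) n.
Proof.
elim: n => [|n IH]; first by rewrite muln0.
by rewrite mulnS GpowD IH GpowS.
Qed.

Lemma Gpow_conj d k (g h : G d k) n :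
  Gpow (Gmul (Gmul g h) (Ginv g)) n = Gmul (Gmul g (Gpow h n)) (Ginv g).
Proof.
elim: n => [|n IH]; first by rewrite Gpow0 Gmulg1 GmulgV.
by rewrite GpowS IH GpowS !GmulA GmulgKV.
Qed.

Lemma subgroup_pow d k (H : G d k -> Prop) h n : subgroup H -> H h -> H (Gpow h n).
Proof.
case=> H1 HM _ Hh; elim: n => [|n IH] //; rewrite GpowS; exact: HM.
Qed.

Lemma Galpha_val d k i : i <= d -> 1 < k -> sval (Galpha d k i) = [:: (i, 1)].
Proof.
move=> id k1; rewrite /Galpha /insubd insubT //=.
by rewrite /reduced /= /valid /= id k1.
Qed.

Lemma Galpha_k1 d k i : k <= 1 -> Galpha d k i = Gone d k.
Proof.
move=> k1; have nr : reduced d k [:: (i, 1)] = false.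
  by rewrite /reduced /= /valid /= andbT; case: k k1 => [|[]] //; rewrite andbF.
by rewrite /Galpha /insubd insubF.
Qed.

Lemma alpha_pow_val d k i m : i <= d -> 0 < k ->
  sval (Gpow (Galpha d k i) m) = if m %% k == 0 then [::] else [:: (i, m %% k)].
Proof.
move=> id k0; case: (leqP k 1) => k1.
  have -> : k = 1 by apply/eqP; rewrite eqn_leq k1.
  by rewrite Galpha_k1 // modn1; elim: m => // m IH; rewrite GpowS Gmul1g.
elim: m => [|m IH]; first by rewrite mod0n.
rewrite GpowS Gmul_val Galpha_val // IH /=.
case: eqP => [e|ne] /=.
  by rewrite -[m.+1]addn1 -modnDml e add0n (modn_small k1).
by rewrite eqxx -[m.+1]add1n modnDmr.
Qed.


Lemma Gpow1 d k m : Gpow (Gone d k) m = Gone d k.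
Proof. by elim: m => // m IH; rewrite GpowS IH Gmul1g. Qed.

Lemma alpha_mod d k i m : i <= d -> 0 < k ->
  Gpow (Galpha d k i) m = Gpow (Galpha d k i) (m %% k).
Proof. by move=> id k0; apply: Gext; rewrite !alpha_pow_val // modn_mod. Qed.

Lemma alpha_one d k i m : i <= d -> 0 < k ->
  Gpow (Galpha d k i) m = Gone d k -> m %% k = 0.
Proof.
move=> id k0 /(congr1 sval); rewrite alpha_pow_val //=.
by case: eqP.
Qed.

Lemma alpha_one' d k i m : i <= d -> 0 < k ->
  m %% k = 0 -> Gpow (Galpha d k i) m = Gone d k.
Proof. by move=> id k0 e; apply: Gext; rewrite alpha_pow_val // e. Qed.

Lemma alpha_cancel d k i n m : i <= d -> 0 < k ->
  Gmul (Gpow (Galpha d k i) (n + (k - 1) * m)) (Gpow (Galpha d k i) m)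
  = Gpow (Galpha d k i) n.
Proof.
move=> id k0; rewrite -GpowD -addnA -{2}(mul1n m) -mulnDl subnK //.
by rewrite GpowD (@alpha_one' d k i (k * m)) ?Gmulg1 // modnMr.
Qed.

Lemma alpha_inv d k i m : i <= d -> 0 < k ->
  Ginv (Gpow (Galpha d k i) m) = Gpow (Galpha d k i) ((k - 1) * m).
Proof.
move=> id k0; symmetry; apply: Ginv_uniq.
by rewrite -[X in Gpow _ X](add0n) alpha_cancel.
Qed.

Lemma mclass_shift d k (H : G d k -> Prop) S T h0 : subgroup H -> H h0 ->
  seteq T (setR S h0) -> mceq (mclass H S) (mclass H T).
Proof.
case=> H1 HM HV Hh0 eT C; split.
  case=> h [Hh eC]; exists (Gmul (Ginv h0) h); split; first by apply: HM => //; apply: HV.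
  move=> x; apply: (iff_trans (eC x)); split.
    case=> s [Ss ->]; exists (Gmul s h0); split; last by rewrite -GmulA GmulKVg.
    by apply/(eT _); exists s.
  case=> t [/(eT _) [s [Ss ->]] ->]; exists s; split => //; by rewrite -GmulA GmulKVg.
case=> h [Hh eC]; exists (Gmul h0 h); split; first exact: HM.
move=> x; apply: (iff_trans (eC x)); split.
  case=> t [/(eT _) [s [Ss ->]] ->]; exists s; split => //; by rewrite GmulA.
case=> s [Ss ->]; exists (Gmul s h0); split; last by rewrite GmulA.
by apply/(eT _); exists s.
Qed.

Lemma mclass_self d k (H : G d k -> Prop) S : subgroup H -> mclass H S S.
Proof.
case=> H1 _ _; exists (Gone d k); split => // x; split.
  by move=> Sx; exists x; rewrite Gmulg1.
by case=> s [Ss ->]; rewrite Gmulg1.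
Qed.

Lemma mceq_mclass d k (H : G d k -> Prop) S T : subgroup H ->
  mceq (mclass H S) (mclass H T) -> exists2 h, H h & seteq T (setR S h).
Proof.
move=> sH e; have := (e T).2 (mclass_self T sH).
by case=> h [Hh eT]; exists h.
Qed.

Lemma dcell_eq d k (H : G d k -> Prop) g1 g2 : subgroup H ->
  mceq (dcell H g1) (dcell H g2) <-> exists2 h, H h & g2 = Gmul g1 h.
Proof.
move=> sH; split.
  case/(mceq_mclass sH) => h Hh eT; exists h => //.
  by case: ((eT g2).1 erefl) => s [-> ->].
case=> h Hh e; apply: (mclass_shift sH Hh) => x; split.
  by move=> ->; exists g1.
by case=> s [-> ->].
Qed.

Lemma in_ridge d k (H : G d k -> Prop) g' i g : subgroup H -> i <= d -> 0 < k ->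
  dcell_in_ridge H g' i g <->
  exists m, exists2 h, H h & g' = Gmul (Gmul (Gpow (Galpha d k i) m) g) h.
Proof.
move=> sH id k0; have sH' := sH; case: sH' => H1 HM HV; split.
  case/(mceq_mclass sH) => h Hh eT.
  have [s [[m ->] eg]] : setR (Kcoset i g') h g by apply/(eT _); exists 0; rewrite Gpow0 Gmul1g.
  exists ((k - 1) * m); exists (Ginv h); first exact: HV.
  by rewrite -alpha_inv // eg -!GmulA GmulKg GmulgV Gmulg1.
case=> m [h Hh ->] C; apply: iff_sym; apply: (mclass_shift sH Hh) => x; split.
  case=> n ->; exists (Gmul (Gpow (Galpha d k i) (n + m)) g); split.
    by exists (n + m).
  by rewrite GpowD !GmulA.
case=> s [[n ->] ->]; exists (n + (k - 1) * m).
by rewrite !GmulA alpha_cancel.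
Qed.


Lemma pigeon r : forall (P : nat -> nat -> Prop) n,
  (forall j, j < n -> exists2 t, t < r & P j t) ->
  (forall j1 j2 t, j1 < n -> j2 < n -> P j1 t -> P j2 t -> j1 = j2) -> n <= r.
Proof.
elim: r => [|r IH] P n ex inj.
  by case: n ex inj => // n /(_ 0 isT) [].
case: (classic (exists2 j0, j0 < n & P j0 r)) => [[j0 j0n Pj0]|nex].
  have n0 : 0 < n by apply: leq_ltn_trans j0n.
  suff : n.-1 <= r by rewrite -ltnS prednK.
  have bl : forall j, j < n.-1 -> bump j0 j < n.
    move=> j jn; rewrite /bump; have := prednK n0; move: (n.-1) jn => m jn; case: (leqP j0 j) => _ /=; lia.
  apply: (IH (fun j t => P (bump j0 j) t)).
    move=> j jn; case: (ex _ (bl _ jn)) => t; rewrite ltnS leq_eqVlt.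
    case/orP => [/eqP ->|tr] Pt; last by exists t.
    by have := inj _ _ _ (bl _ jn) j0n Pt Pj0 => /eqP; rewrite eq_sym (negPf (neq_bump _ _)).
  move=> j1 j2 t h1 h2 P1 P2; have := inj _ _ _ (bl _ h1) (bl _ h2) P1 P2.
  by move/(congr1 (unbump j0)); rewrite !bumpK.
apply: leqW; apply: (IH P) => // j jn; case: (ex _ jn) => t; rewrite ltnS leq_eqVlt.
case/orP => [/eqP ->|tr] Pt; last by exists t.
by case: nex; exists j.
Qed.

Lemma mceq_sym d k (A B : (G d k -> Prop) -> Prop) : mceq A B -> mceq B A.
Proof. by move=> e C; apply: iff_sym. Qed.

Lemma mceq_trans d k (A B C : (G d k -> Prop) -> Prop) : mceq A B -> mceq B C -> mceq A C.
Proof. by move=> e1 e2 X; apply: iff_trans (e1 X) (e2 X). Qed.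

Lemma main1 d k (H : G d k -> Prop) i g : subgroup H -> i <= d -> 0 < k ->
  ridge_degree H i g k <-> trivial_meet H i g.
Proof.
move=> sH id k0; have sH' := sH; case: sH' => H1 HM HV.
set a := Galpha d k i.
split; last first.
  move=> tm; exists (fun j => Gmul (Gpow a j) g); split.
  - move=> j _; apply/(in_ridge _ _ sH id k0); exists j; exists (Gone d k) => //.
    by rewrite Gmulg1.
  - move=> j1 j2 j1k j2k /(dcell_eq _ _ sH) [h Hh e].
    have gh : Gmul g h = Gmul (Ginv (Gpow a j1)) (Gmul (Gpow a j2) g).
      by rewrite e -!GmulA GmulKg.
    have x1 : Gmul (Gmul g h) (Ginv g) = Gmul (Ginv (Gpow a j1)) (Gpow a j2).
      by rewrite gh GmulA GmulgK.
    have xe : Gpow a ((k - 1) * j1 + j2) = Gmul (Gmul g h) (Ginv g).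
      by rewrite x1 GpowD alpha_inv.
    have := tm _ (ex_intro _ _ erefl) (ex_intro2 _ _ h Hh xe).
    move=> /alpha_one => /(_ id k0) e0.
    have kj : k * j1 = (k - 1) * j1 + j1 by rewrite -{1}(subnK k0) mulnDl mul1n.
    have : (k * j1 + j2) %% k = j2 by rewrite mulnC modnMDl modn_small.
    by rewrite kj addnAC -modnDml e0 add0n modn_small.
  - move=> x /(in_ridge _ _ sH id k0) [m [h Hh ->]].
    exists (m %% k); first by rewrite ltn_pmod.
    apply/(dcell_eq _ _ sH); exists (Ginv h); first exact: HV.
    by rewrite GmulgK -alpha_mod.
case=> f [fR finj fcov] x [m ->] [h Hh ex].
case: (eqVneq (m %% k) 0) => [r0|rn0]; first exact: alpha_one'.
exfalso; set r := m %% k in rn0.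
have r0 : 0 < r by rewrite lt0n.
have : k <= r; last by rewrite leqNgt ltn_pmod.
apply: (@pigeon r (fun j t => mceq (dcell H (f j)) (dcell H (Gmul (Gpow a t) g))) k).
  move=> j jk; case/(in_ridge _ _ sH id k0): (fR j jk) => n [h' Hh' fj].
  exists (n %% r); first by rewrite ltn_pmod.
  apply/(dcell_eq _ _ sH); exists (Ginv (Gmul (Gpow h (n %/ r)) h')).
    by apply: HV; apply: HM => //; apply: subgroup_pow.
  have : Gpow a n = Gmul (Gpow a (n %% r)) (Gmul (Gmul g (Gpow h (n %/ r))) (Ginv g)).
    rewrite -Gpow_conj -ex {1}(divn_eq n r) addnC GpowD mulnC GpowM.
    by rewrite [Gpow a r](alpha_mod _ id k0) modn_mod -alpha_mod.
  move=> en; rewrite fj en GinvM !GmulA GmulgKV !GmulgK //.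
move=> j1 j2 t j1k j2k e1 e2; apply: finj => //.
exact: mceq_trans e1 (mceq_sym e2).
Qed.

Unset Implicit Arguments.

Theorem lemma9 (d k : nat) (hd : 1 <= d) (hk : 1 <= k)
  (H : G d k -> Prop) (hH : subgroup H) :
  ((forall i g, i <= d -> ridge_degree H i g k) <->
   (forall i g, i <= d -> trivial_meet H i g)) /\
  (normal H ->
   ((forall i g, i <= d -> ridge_degree H i g k) <->
    (forall i, i <= d -> quot_order H (Galpha d k i) k))).
Proof.
have E : (forall i g, i <= d -> ridge_degree H i g k) <->
   (forall i g, i <= d -> trivial_meet H i g).
  by split=> A i g id; [apply/(@main1 d k H i g hH id hk) | apply/(@main1 d k H i g hH id hk)]; apply: A.
split => // -[_ nH]; apply: (iff_trans E).
have hH' := hH; case: hH' => H1 HM HV.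
split=> A i.
  move=> id.
  split => //; first by rewrite (@alpha_one' d k i k id hk) ?modnn.
  move=> m /andP[m0 mk] Hm.
  have e1 : Gpow (Galpha d k i) m = Gmul (Gmul (Gone d k) (Gpow (Galpha d k i) m)) (Ginv (Gone d k)).
    by rewrite Gmul1g Ginv1 Gmulg1.
  have := A i (Gone d k) id (Gpow (Galpha d k i) m) (ex_intro _ m erefl) (ex_intro2 _ _ _ Hm e1).
  move/(@alpha_one d k i m id hk); rewrite modn_small // => m00.
  by rewrite m00 in m0.
move=> g id x [m ->] [h Hh ex].
have Hm : H (Gpow (Galpha d k i) m) by rewrite ex; apply: nH.
case: (A i id) => _ _ nq.
case: (eqVneq (m %% k) 0) => [r0|rn0]; first exact: (@alpha_one' d k i m id hk).
exfalso; apply: (nq (m %% k)); first by rewrite lt0n rn0 ltn_pmod.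
by rewrite -(@alpha_mod d k i m id hk).
Qed.
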